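(* For every positive integer $n$, the splitting graph $\mathrm{Spltg}(K_{1,n})$ of the star $K_{1,n}$ admits a signed product cordial labeling.
   Context: A graph $G$ is signed product cordial if there is a vertex labeling $\alpha: V(G)\to\{1,-1\}$ such that, with the induced edge labeling $\alpha^*(uv)=\alpha(u)\alpha(v)$, we have $|v_\alpha(-1)-v_\alpha(1)|\le 1$ and $|e_{\alpha^*}(-1)-e_{\alpha^*}(1)|\le 1$. Here $v_\alpha(x)$ is the number of vertices labeled $x$ and $e_{\alpha^*}(x)$ is the number of edges labeled $x$; such an $\alpha$ is called a signed product cordial labeling. The splitting graph $\mathrm{Spltg}(G)$ of a graph $G$ is obtained from $G$ by adding, for each vertex $v$ of $G$, a new vertex $v'$ made adjacent to exactly the neighbors of $v$ in $G$. The star $K_{1,n}$ has an apex vertex $v_0$ adjacent to $n$ pendant vertices $v_1,\dots,v_n$. *)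

(* Defs.v *)
From mathcomp Require Import all_boot.
Set Implicit Arguments. Unset Strict Implicit. Unset Printing Implicit Defensive.

Record sgraph := SGraph {
  vtx : finType;
  adj : rel vtx;
  adj_sym : symmetric adj;
  adj_irr : irreflexive adj }.

Definition edges (G : sgraph) : {set {set vtx G}} :=
  [set E : {set vtx G} | [exists u, exists v, adj u v && (E == [set u; v])]].

(* Vertex labeling alpha : V -> {1, -1}, encoded as bool:
   true = 1, false = -1. *)
Definition vcount (G : sgraph) (alpha : vtx G -> bool) (b : bool) : nat :=
  #|[set v | alpha v == b]|.

(* induced edge label alpha(u)*alpha(v): it is 1 iff alpha u == alpha v *)
Definition ecount (G : sgraph) (alpha : vtx G -> bool) (b : bool) : nat :=
  #|[set E in edges G | [exists u, exists v,
        [&& E == [set u; v], adj u v & (alpha u == alpha v) == b]]]|.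

Definition dist (a b : nat) : nat := (a - b) + (b - a).

Definition signed_product_cordial_labeling (G : sgraph) (alpha : vtx G -> bool) :=
  dist (vcount alpha false) (vcount alpha true) <= 1 /\
  dist (ecount alpha false) (ecount alpha true) <= 1.

Definition signed_product_cordial (G : sgraph) :=
  exists alpha : vtx G -> bool, signed_product_cordial_labeling alpha.

(* Splitting graph: vertices inl v (original) and inr v (the copy v');
   original edges kept, v' adjacent to exactly the G-neighbours of v. *)
Definition spl_adj (G : sgraph) : rel (vtx G + vtx G) :=
  fun x y => match x, y with
  | inl u, inl v => adj u v
  | inl u, inr v => adj u v
  | inr u, inl v => adj u v
  | inr _, inr _ => false
  end.

Lemma spl_adj_sym G : symmetric (@spl_adj G).
Proof. by case=> u [] v //=; apply: adj_sym. Qed.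

Lemma spl_adj_irr G : irreflexive (@spl_adj G).
Proof. by case=> u //=; apply: adj_irr. Qed.

Definition Spltg (G : sgraph) : sgraph :=
  @SGraph (vtx G + vtx G)%type (@spl_adj G) (@spl_adj_sym G) (@spl_adj_irr G).

Definition star_adj (n : nat) : rel 'I_n.+1 :=
  fun i j => ((val i == 0) && (val j != 0)) || ((val j == 0) && (val i != 0)).

Lemma star_adj_sym n : symmetric (@star_adj n).
Proof. by move=> i j; rewrite /star_adj orbC. Qed.

Lemma star_adj_irr n : irreflexive (@star_adj n).
Proof. by move=> i; rewrite /star_adj; case: (val i == 0). Qed.

Definition star (n : nat) : sgraph :=
  @SGraph 'I_n.+1 (@star_adj n) (@star_adj_sym n) (@star_adj_irr n).

(* Main.v *)
Require Import Defs.
From mathcomp Require Import all_boot.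

Lemma set2_eq (T : finType) (x y u v : T) :
  [set x; y] = [set u; v] -> ((x == u) && (y == v)) || ((x == v) && (y == u)).
Proof.
move/setP=> H.
have := H x; have := H y; have := H v; rewrite !inE !eqxx ?orbT /=.
move=> /orP[]/eqP hv /esym /orP[]/eqP hy /esym /orP[]/eqP hx; subst;
  rewrite ?eqxx ?orbT /=. all: try done. all: by move: (H u); rewrite !inE eqxx /= orbb => /eqP ->; rewrite eqxx.
Qed.


Lemma dc (G : sgraph) (P : vtx G -> vtx G -> bool)
  (Psym : forall u v, P u v = P v u) :
  \sum_(p : vtx G * vtx G | adj p.1 p.2 && P p.1 p.2) 1 =
  2 * #|[set E in edges G | [exists u, exists v, [&& E == [set u; v], adj u v & P u v]]]|.
Proof.
set T := [set E in edges G | _].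
rewrite (partition_big (fun p => [set p.1; p.2]) (mem T)); last first.
  move=> [u v] /= /andP[huv Puv]; rewrite !inE; apply/andP; split.
    by apply/existsP; exists u; apply/existsP; exists v; rewrite huv eqxx.
  by apply/existsP; exists u; apply/existsP; exists v; rewrite huv Puv eqxx.
rewrite -sum1_card big_distrr /=; apply: eq_bigr => E.
rewrite inE => /andP[_ /existsP[u /existsP[v /and3P[/eqP-> huv Puv]]]].
have neq : u != v by apply/eqP=> e; move: huv; rewrite e adj_irr.
have -> : 2 = #|[set (u, v); (v, u)]| by rewrite cards2 xpair_eqE (negbTE neq).
rewrite muln1.
rewrite -sum1_card; apply: eq_bigl => -[x y] /=; rewrite !inE /= !xpair_eqE.
apply/idP/idP.
  by move=> /andP[_ /eqP/set2_eq].
move=> /orP[]/andP[/eqP-> /eqP->]; rewrite ?eqxx ?huv ?Puv //.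
by rewrite adj_sym huv Psym Puv setUC eqxx.
Qed.

From mathcomp Require Import zify.

Lemma sum_lt N M : \sum_(j < N) ((j < M) : nat) = minn M N.
Proof. elim: N => [|N IH]; first by rewrite big_ord0; lia.
rewrite big_ord_recr /= IH; case: ltnP => /= h; lia. Qed.

Lemma sum_nlt N M : \sum_(j < N) ((~~ (j < M)) : nat) = N - minn M N.
Proof. elim: N => [|N IH]; first by rewrite big_ord0; lia.
rewrite big_ord_recr /= IH; case: ltnP => /= h; lia. Qed.

Lemma sum_ltT N M : \sum_(j < N) (((j < M) == true) : nat) = minn M N.
Proof. rewrite -sum_lt; apply: eq_bigr => j _; by rewrite eqb_id. Qed.
Lemma sum_ltF N M : \sum_(j < N) (((j < M) == false) : nat) = N - minn M N.
Proof. rewrite -sum_nlt; apply: eq_bigr => j _; by rewrite eqbF_neg. Qed.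

Lemma sumA N M c b : \sum_(j < N) (((c == (j < M)) == b) : nat) =
  if c == b then minn M N else N - minn M N.
Proof.
case: (boolP (c == b)) => h; [rewrite -sum_lt | rewrite -sum_nlt];
  apply: eq_bigr => j _; move: h; by case: c; case: b; case: (j < M).
Qed.
Lemma sumB N M c b : \sum_(j < N) ((((j < M) == c) == b) : nat) =
  if c == b then minn M N else N - minn M N.
Proof. rewrite -sumA; apply: eq_bigr => j _; by rewrite (eq_sym c). Qed.

Lemma card_nat (T : finType) (c : pred T) : #|[set v | c v]| = \sum_v (c v : nat).
Proof. rewrite -sum1_card big_mkcond; apply: eq_bigr => v _; rewrite inE; by case: (c v). Qed.

Lemma star_sum n (f : nat -> nat -> bool) :
  \sum_(i < n.+1) \sum_(j < n.+1) ((star_adj i j && f i j) : nat) =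
  \sum_(j < n) (f 0 j.+1 : nat) + \sum_(i < n) (f i.+1 0 : nat).
Proof.
rewrite big_ord_recl big_ord_recl /star_adj /= add0n; congr (_ + _).
rewrite (eq_bigr (fun i : 'I_n => (f (bump 0 i) 0 : nat))) //.
move=> i _; rewrite big_ord_recl /= big1 ?addn0 //.
Qed.

Definition lab n (x : vtx (Spltg (star n))) : bool :=
  match x with
  | inl i => (i : nat) <= n - n./2
  | inr i => (0 < (i : nat)) && ((i : nat) <= n./2)
  end.

Lemma vc n b : vcount (@lab n) b = n.+1.
Proof.
rewrite /vcount card_nat big_sumType /= !big_ord_recl /=.
have E1 : forall i : 'I_n, (bump 0 i <= n - n./2) = (i < n - n./2) by [].
have E2 : forall i : 'I_n, (bump 0 i <= n./2) = (i < n./2) by [].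
under eq_bigr do rewrite E1. under [in X in _ + X]eq_bigr do rewrite E2. rewrite leq0n.
case: b; rewrite ?sum_ltT ?sum_ltF /=; have := odd_double_half n; rewrite -muln2; case: (odd n) => /=; lia.
Qed.

Lemma ec n b : 2 * ecount (@lab n) b =
  let m := n - n./2 in let k := n./2 in
  ((if true == b then minn m n else n - minn m n) * 2 +
   ((if true == b then minn k n else n - minn k n) + (if false == b then minn m n else n - minn m n)) +
   ((if false == b then minn m n else n - minn m n) + (if true == b then minn k n else n - minn k n))).
Proof.
have Ps : forall u v, (fun u v => (lab n u == lab n v) == b) u v = (fun u v => (lab n u == lab n v) == b) v u.
  by move=> u v /=; rewrite (eq_sym (lab n u)).
rewrite /ecount -(@dc (Spltg (star n)) _ Ps).
have -> : \sum_(p : vtx (Spltg (star n)) * vtx (Spltg (star n)) | adj p.1 p.2 && ((lab n p.1 == lab n p.2) == b)) 1 =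
  \sum_(u : vtx (Spltg (star n))) \sum_(v : vtx (Spltg (star n))) ((spl_adj u v && ((lab n u == lab n v) == b)) : nat).
  rewrite pair_big big_mkcond /=; apply: eq_bigr => -[u v] _ /=; by case: ifP.
rewrite big_sumType /=.
under eq_bigr do rewrite big_sumType /=.
under [in X in _ + X]eq_bigr do rewrite big_sumType /=.
rewrite !big_split /= [X in _ + (_ + X)]big1 ?addn0; last by move=> i _; rewrite big1.
set m := n - n./2. set k := n./2.
rewrite (star_sum n (fun i j => ((i <= m) == (j <= m)) == b)).
rewrite (star_sum n (fun i j => ((i <= m) == (0 < j <= k)) == b)).
rewrite (star_sum n (fun i j => ((0 < i <= k) == (j <= m)) == b)) /=.
rewrite leq0n !sumA !sumB.
by rewrite muln2 -addnn.
Qed.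

Theorem theorem2p1 (n : nat) : 0 < n -> signed_product_cordial (Spltg (star n)).
Proof.
move=> _; exists (@lab n); split.
  by rewrite /dist !vc subnn.
have E0 := ec n false; have E1 := ec n true; simpl in E0, E1.
rewrite /dist; have := odd_double_half n; rewrite -muln2; case: (odd n) => /=; lia.
Qed.
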